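(* Let $K=2^m$ with $m\ge2$ and $L\ge2$, and let $a(t)\in\mathbb{R}^{K-1}$ evolve according to $$\frac{da_i}{dt}=\frac{1}{D}b_ia_i^{\frac{2L}{L+1}},\qquad b_i=\sum_{j=1}^{K-1}\Psi_{ij}e^{-(\Psi a)_j},\quad D=1+\sum_{j=1}^{K-1}e^{-(\Psi a)_j}.$$ Suppose $a(0)$ has $a_i(0)=\gamma_0$ for odd $i$ and $a_i(0)=\delta_0$ for even $i$, with $\gamma_0,\delta_0>0$ and $\frac{\gamma_0}{\delta_0}>\big(\frac{K}{K-2}\big)^{\frac{L+1}{L-1}}$. Then for all $t\ge0$, $a(t)$ keeps this form ($a_i(t)=\gamma(t)$ for odd $i$, $a_i(t)=\delta(t)$ for even $i$), and the ratio $\gamma(t)/\delta(t)$ is strictly increasing in $t$; in particular $\gamma(t)/\delta(t)$ stays above $\big(\frac{K}{K-2}\big)^{\frac{L+1}{L-1}}$ for all $t\ge0$.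
   Context: Sylvester Hadamard matrices: $\Phi_1=(1)$, $\Phi_{2^m}=\begin{bmatrix}\Phi_{2^{m-1}}&\Phi_{2^{m-1}}\\ \Phi_{2^{m-1}}&-\Phi_{2^{m-1}}\end{bmatrix}$, $\Phi=\Phi_K$. $\Psi\in\mathbb{R}^{(K-1)\times(K-1)}$ is obtained from $1_K1_K^T-\Phi$ by deleting its first row and first column, indexed $1,\dots,K-1$. *)

(* Defs.v *)
From HB Require Import structures.
From mathcomp Require Import all_boot all_order all_algebra.
From mathcomp Require Import all_classical all_reals all_analysis.
Set Implicit Arguments. Unset Strict Implicit. Unset Printing Implicit Defensive.
Import Order.TTheory GRing.Theory Num.Theory.
Local Open Scope ring_scope.

Lemma sylvester_dim (m : nat) : (2 ^ m + 2 ^ m = 2 ^ m.+1)%N.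
Proof. by rewrite expnS mul2n addnn. Qed.

Fixpoint sylvester (R : pzRingType) (m : nat) : 'M[R]_(2 ^ m) :=
  match m with
  | 0 => 1%:M
  | m'.+1 =>
      castmx (sylvester_dim m', sylvester_dim m')
        (block_mx (sylvester R m') (sylvester R m')
                  (sylvester R m') (- sylvester R m'))
  end.

Lemma succ_ord_proof (m : nat) (i : 'I_(2 ^ m).-1) : (i.+1 < 2 ^ m)%N.
Proof.
have h : (i < (2 ^ m).-1)%N := ltn_ord i.
have p : (0 < 2 ^ m)%N by rewrite expn_gt0.
move: (nat_of_ord i) h => k; by rewrite -{2}(prednK p) ltnS.
Qed.

(* index i (0-based, paper index i+1) of Psi  |->  index i+1 of Phi *)
Definition succ_ord (m : nat) (i : 'I_(2 ^ m).-1) : 'I_(2 ^ m) :=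
  Ordinal (succ_ord_proof i).

(* Psi = (1_K 1_K^T - Phi_K) with first row and first column deleted, K = 2^m.
   Entry (i,j) (0-based) is the paper's entry (i+1, j+1). *)
Definition Psi (R : pzRingType) (m : nat) : 'M[R]_((2 ^ m).-1) :=
  \matrix_(i, j) (1 - sylvester R m (succ_ord i) (succ_ord j)).

Definition Psi_app (R : pzRingType) (m : nat) (a : 'I_(2 ^ m).-1 -> R)
  (j : 'I_(2 ^ m).-1) : R :=
  \sum_k Psi R m j k * a k.

Definition bcoef (R : realType) (m : nat) (a : 'I_(2 ^ m).-1 -> R)
  (i : 'I_(2 ^ m).-1) : R :=
  \sum_j Psi R m i j * expR (- Psi_app a j).

Definition Dcoef (R : realType) (m : nat) (a : 'I_(2 ^ m).-1 -> R) : R :=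
  1 + \sum_j expR (- Psi_app a j).

(* Main.v *)
Require Import Defs.
From HB Require Import structures.
From mathcomp Require Import all_boot all_order all_algebra.
From mathcomp Require Import all_classical all_reals all_analysis.
Import Order.TTheory GRing.Theory Num.Theory.
Import numFieldNormedType.Exports.
Local Open Scope ring_scope.
From mathcomp Require Import ring lra.

Fixpoint sgn (m u v : nat) : bool :=
  match m with
  | 0 => false
  | m'.+1 => sgn m' (u %% 2 ^ m') (v %% 2 ^ m') (+) ((2 ^ m' <= u) && (2 ^ m' <= v))%N
  end.

Lemma sylvesterE (R : pzRingType) m (i j : 'I_(2 ^ m)) :
  sylvester R m i j = (-1) ^+ sgn m i j.
Proof.
elim: m i j => [|m IH] i j.
  by rewrite /= mxE !ord1 eqxx.
rewrite /= castmxE /=.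
set i' := cast_ord _ i; set j' := cast_ord _ j.
have ei : (i : nat) = i' by [].
have ej : (j : nat) = j' by [].
rewrite ei ej.
case: (splitP i') => k Hk; case: (splitP j') => l Hl.
- rewrite Hk Hl.
  have -> : i' = lshift _ k by apply/val_inj.
  have -> : j' = lshift _ l by apply/val_inj.
  rewrite block_mxEul IH !modn_small //.
  by rewrite [(_ <= k)%N]leqNgt [(_ <= l)%N]leqNgt !ltn_ord /= addbF.
- rewrite Hk Hl.
  have -> : i' = lshift _ k by apply/val_inj.
  have -> : j' = rshift _ l by apply/val_inj.
  rewrite block_mxEur IH modn_small //.
  have -> : ((2 ^ m + l) %% 2 ^ m = l)%N by rewrite modnDl modn_small.
  by rewrite leqNgt ltn_ord /= addbF.
- rewrite Hk Hl.
  have -> : i' = rshift _ k by apply/val_inj.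
  have -> : j' = lshift _ l by apply/val_inj.
  rewrite block_mxEdl IH [(l %% _)%N]modn_small //.
  have -> : ((2 ^ m + k) %% 2 ^ m = k)%N by rewrite modnDl modn_small.
  by rewrite [(_ <= l)%N]leqNgt ltn_ord andbF addbF.
- rewrite Hk Hl.
  have -> : i' = rshift _ k by apply/val_inj.
  have -> : j' = rshift _ l by apply/val_inj.
  rewrite block_mxEdr mxE IH.
  have -> : ((2 ^ m + k) %% 2 ^ m = k)%N by rewrite modnDl modn_small.
  have -> : ((2 ^ m + l) %% 2 ^ m = l)%N by rewrite modnDl modn_small.
  rewrite !leq_addr /=.
  by rewrite signr_addb expr1 mulrN1.
Qed.

Lemma sgn_sym m u v : sgn m u v = sgn m v u.
Proof. by elim: m u v => //= m IH u v; rewrite IH andbC. Qed.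

Lemma sgn0 m v : sgn m 0 v = false.
Proof. by elim: m v => //= m IH v; rewrite mod0n IH leqNgt expn_gt0. Qed.

Lemma sgn1 m v : (1 <= m)%N -> (v < 2 ^ m)%N -> sgn m 1 v = odd v.
Proof.
elim: m v => // m IH v _ hv /=.
case: m IH hv => [|m] IH hv.
  by case: v hv => [|[|]].
rewrite modn_small; last by rewrite (ltn_exp2l 0).
rewrite IH //; last by rewrite ltn_mod expn_gt0.
rewrite [(2 ^ m.+1 <= 1)%N]leqNgt (ltn_exp2l 0) //= addbF.
by rewrite odd_mod // expnS mul2n odd_double.
Qed.

Lemma sgnS m u v : sgn m.+1 u v =
  sgn m (u %% 2 ^ m) (v %% 2 ^ m) (+) ((2 ^ m <= u) && (2 ^ m <= v))%N.
Proof. by []. Qed.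
Arguments sgn : simpl never.

Definition psum (R : pzRingType) m u (b : bool) : R :=
  \sum_(0 <= v < 2 ^ m | odd v == b) (-1) ^+ sgn m u v.

Lemma psumE (R : pzRingType) m u b : (u < 2 ^ m.+1)%N ->
  psum R m.+1 u b =
  if u == 0%N then (2 ^ m)%:R
  else if u == 1%N then (if b then - (2 ^ m)%:R else (2 ^ m)%:R) else 0.
Proof.
rewrite /psum; elim: m u => [|m IH] u hu.
  rewrite big_mkcond /= !big_nat_recr //= big_geq // !sgnS.
  by case: u hu => [|[|]] //; case: b => _ /=; rewrite ?expr0 ?expr1 ?add0r ?addr0.
set N := (2 ^ m.+1)%N.
have hN : (2 ^ m.+2 = N + N)%N by rewrite /N expnS mul2n addnn.
have N2 : (2 <= N)%N by rewrite /N (leq_exp2l 1).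
have oN : odd N = false by rewrite /N expnS mul2n odd_double.
rewrite hN (@big_cat_nat _ _ _ N 0 (N + N) _ _ (leq0n N) (leq_addr N N)) /=.
rewrite [X in _ + \sum_(X <= _ < _ | _) _](_ : N = 0 + N)%N // big_addn addnK.
have E1 : \sum_(0 <= v < N | odd v == b) ((-1) ^+ sgn m.+2 u v : R) =
          \sum_(0 <= v < N | odd v == b) (-1) ^+ (sgn m.+1 (u %% N) v (+) (N <= u)%N && (N <= v)%N).
  rewrite big_mkcond [RHS]big_mkcond; apply: eq_big_nat => v /andP[_ hv] /=.
  by rewrite sgnS [(v %% _)%N]modn_small.
have E2 : \sum_(0 <= v < N | odd (v + N) == b) ((-1) ^+ sgn m.+2 u (v + N) : R) =
          \sum_(0 <= v < N | odd v == b) (-1) ^+ (sgn m.+1 (u %% N) v (+) (N <= u)%N).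
  rewrite big_mkcond [RHS]big_mkcond; apply: eq_big_nat => v /andP[_ hv] /=.
  rewrite oddD oN addbF.
  rewrite sgnS.
  have -> : ((v + N) %% 2 ^ m.+1 = v)%N by rewrite modnDr modn_small.
  by rewrite leq_addl andbT.
rewrite E1 E2.
case: (ltnP u N) => huN.
  rewrite modn_small //=.
  rewrite (eq_bigr (fun v => (-1) ^+ sgn m.+1 u v)); last by move=> v _; rewrite addbF.
  rewrite IH // -mulr2n /N.
  have -> : (2 ^ m.+1 = (2 ^ m) * 2)%N by rewrite expnS mulnC.
  by case: (u == 0%N); case: (u == 1%N); case: (b); rewrite ?mul0rn ?mulrnA ?mulNrn ?natrM ?mulr_natr.
have u0 : (u == 0%N) = false by apply/negbTE; rewrite -lt0n ltnW // (leq_trans N2 huN).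
have u1 : (u == 1%N) = false by apply/negbTE; rewrite neq_ltn (leq_trans N2 huN) orbT.
rewrite u0 u1 -big_split /= big_nat_cond big1 // => v /andP[/andP[_ hv] _].
rewrite [(N <= v)%N]leqNgt hv /=.
by case: (sgn _ _ _); rewrite /= ?expr0 ?expr1 ?subrr ?addNr.
Qed.

Lemma PsiE (R : pzRingType) m (i j : 'I_(2 ^ m).-1) :
  Psi R m i j = 1 - (-1) ^+ sgn m i.+1 j.+1.
Proof. by rewrite /Psi mxE sylvesterE. Qed.

Lemma Psi_sym (R : pzRingType) m (i j : 'I_(2 ^ m).-1) : Psi R m i j = Psi R m j i.
Proof. by rewrite !PsiE sgn_sym. Qed.

Lemma Psi_ge0 (R : numDomainType) m (i j : 'I_(2 ^ m).-1) : 0 <= Psi R m i j.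
Proof. by rewrite PsiE; case: sgn; rewrite ?expr0 ?expr1 ?subrr ?opprK // ler0n. Qed.

Lemma Psi_le2 (R : numDomainType) m (i j : 'I_(2 ^ m).-1) : Psi R m i j <= 2.
Proof. by rewrite PsiE; case: sgn; rewrite ?expr0 ?expr1 ?subrr ?opprK // ler0n. Qed.

Lemma Psi_col0 (R : pzRingType) m (i j : 'I_(2 ^ m.+1).-1) : (j : nat) = 0%N ->
  Psi R m.+1 i j = if odd i.+1 then 2 else 0.
Proof.
move=> j0; rewrite PsiE j0 sgn_sym sgn1 //.
  by case: odd; rewrite ?expr0 ?expr1 ?subrr ?opprK.
exact: succ_ord_proof.
Qed.

Lemma sum_shift (R : pzRingType) m (P : pred nat) (f : nat -> R) :
  \sum_(k < (2 ^ m).-1 | P k.+1) f k.+1 =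
  \sum_(0 <= v < 2 ^ m | P v) f v - (if P 0%N then f 0%N else 0).
Proof.
rewrite -[in RHS](@prednK (2 ^ m)) ?expn_gt0 //.
rewrite big_mkcond [in RHS]big_mkcond big_nat_recl //= addrC addrK.
by rewrite big_mkord.
Qed.

Lemma Psi_par (R : pzRingType) m (j : 'I_(2 ^ m.+1).-1) (b : bool) :
  \sum_(k < (2 ^ m.+1).-1 | odd k.+1 == b) Psi R m.+1 j k =
  if (j == 0 :> nat) then (if b then (2 ^ m.+1)%:R else 0) else (2 ^ m)%:R.
Proof.
under eq_bigr => k _ do rewrite PsiE.
rewrite (@sum_shift R m.+1 (fun v => odd v == b) (fun v => 1 - (-1) ^+ sgn m.+1 j.+1 v)).
rewrite sgn_sym sgn0 expr0 subrr if_same subr0 big_split /= sumrN.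
have -> : \sum_(0 <= i < 2 ^ m.+1 | odd i == b) (1 : R) = psum R m.+1 0 b.
  by apply: eq_bigr => v _; rewrite sgn0.
have hj := @succ_ord_proof m.+1 j.
have h0 : (0 < 2 ^ m.+1)%N by rewrite expn_gt0.
rewrite -/(psum R m.+1 j.+1 b) !psumE //.
rewrite eqxx /= eqSS.
case: (j == 0 :> nat); case: (b); rewrite ?subrr ?opprK ?subr0 //.
by rewrite -natrD addnn -mul2n -expnS.
Qed.

Set Implicit Arguments. Unset Strict Implicit. Unset Printing Implicit Defensive.


Lemma Psi_app_sym (R : comPzRingType) m (k : 'I_(2 ^ m.+1).-1) (g0 g1 : R) :
  \sum_u Psi R m.+1 k u * (if odd u.+1 then g0 else g1) =
  if (k == 0 :> nat) then (2 ^ m.+1)%:R * g0 else (2 ^ m)%:R * (g0 + g1).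
Proof.
rewrite (bigID (fun u : 'I_(2 ^ m.+1).-1 => odd u.+1)) /=.
rewrite (eq_bigr (fun u => Psi R m.+1 k u * g0)); last by move=> u ->.
rewrite [X in _ + X](eq_bigr (fun u => Psi R m.+1 k u * g1)); last by move=> u /negbTE ->.
rewrite -!big_distrl /=.
have -> : \sum_(i < (2 ^ m.+1).-1 | odd i.+1) Psi R m.+1 k i =
          \sum_(i < (2 ^ m.+1).-1 | odd i.+1 == true) Psi R m.+1 k i.
  by apply: eq_bigl => u; rewrite eqb_id.
have -> : \sum_(i < (2 ^ m.+1).-1 | ~~ odd i.+1) Psi R m.+1 k i =
          \sum_(i < (2 ^ m.+1).-1 | odd i.+1 == false) Psi R m.+1 k i.
  by apply: eq_bigl => u; rewrite eqbF_neg.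
rewrite !Psi_par.
case: (k == 0 :> nat); rewrite ?mul0r ?addr0 //.
by rewrite mulrDr.
Qed.

Lemma Psi_row (R : comPzRingType) m (k : 'I_(2 ^ m.+1).-1) :
  \sum_u Psi R m.+1 k u = (2 ^ m.+1)%:R.
Proof.
have := @Psi_app_sym R m k 1 1.
under eq_bigr do rewrite if_same mulr1.
move=> ->; case: ifP; rewrite ?mulr1 //.
by move=> _; rewrite mulrDr mulr1 -natrD addnn -mul2n -expnS.
Qed.

Lemma b_sym (R : comPzRingType) m (i j0 : 'I_(2 ^ m.+1).-1) (e0 e1 : R) :
  (j0 : nat) = 0%N ->
  \sum_k Psi R m.+1 i k * (if (k == 0 :> nat) then e0 else e1) =
  Psi R m.+1 i j0 * e0 + ((2 ^ m.+1)%:R - Psi R m.+1 i j0) * e1.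
Proof.
move=> hj0.
rewrite (bigD1 j0) //= hj0 eqxx; congr (_ + _).
rewrite -(Psi_row R i) [X in _ = (X - _) * _](bigD1 j0) //= addrAC subrr add0r big_distrl /=.
apply: eq_bigr => k hk; suff -> : (k == 0 :> nat) = false by [].
by apply/negbTE; apply: contra hk => /eqP h; apply/eqP/val_inj; rewrite /= h hj0.
Qed.

Definition rr m (i0 i1 i : 'I_(2 ^ m).-1) := if odd i.+1 then i0 else i1.
Definition rho m (i0 i1 k : 'I_(2 ^ m).-1) := if (k == 0 :> nat) then i0 else i1.

Lemma odd_rr m (i0 i1 i : 'I_(2 ^ m).-1) : (i0 : nat) = 0%N -> (i1 : nat) = 1%N ->
  odd (rr i0 i1 i).+1 = odd i.+1.
Proof. by move=> h0 h1; rewrite /rr; case: (odd i.+1); rewrite ?h0 ?h1. Qed.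

Lemma rho0 m (i0 i1 k : 'I_(2 ^ m).-1) : (i0 : nat) = 0%N -> (i1 : nat) = 1%N ->
  ((rho i0 i1 k) == 0 :> nat) = (k == 0 :> nat).
Proof. by move=> h0 h1; rewrite /rho; case: (k == 0 :> nat); rewrite ?h0 ?h1. Qed.

Lemma Psi_app_diff (R : realType) m (i0 i1 : 'I_(2 ^ m.+1).-1)
  (h0 : (i0 : nat) = 0%N) (h1 : (i1 : nat) = 1%N) (x : 'I_(2 ^ m.+1).-1 -> R) k :
  Psi_app x k - Psi_app x (rho i0 i1 k) =
  \sum_u (Psi R m.+1 k u - Psi R m.+1 (rho i0 i1 k) u) * (x u - x (rr i0 i1 u)).
Proof.
under eq_bigr do rewrite mulrBr.
rewrite sumrB.
under eq_bigr do rewrite mulrBl.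
rewrite sumrB.
under [X in _ = _ - X]eq_bigr do rewrite mulrBl.
rewrite [X in _ = _ - X]sumrB.
have E : forall j, \sum_u Psi R m.+1 j u * x (rr i0 i1 u) =
    \sum_u Psi R m.+1 j u * (if odd u.+1 then x i0 else x i1).
  by move=> j; apply: eq_bigr => u _; rewrite /rr; case: ifP.
rewrite !E !Psi_app_sym rho0 // subrr subr0.
by [].
Qed.

Lemma b_diff (R : realType) m (i0 i1 : 'I_(2 ^ m.+1).-1)
  (h0 : (i0 : nat) = 0%N) (h1 : (i1 : nat) = 1%N) (x : 'I_(2 ^ m.+1).-1 -> R) i :
  bcoef x i - bcoef x (rr i0 i1 i) =
  \sum_k (Psi R m.+1 i k - Psi R m.+1 (rr i0 i1 i) k) *
     (expR (- Psi_app x k) - expR (- Psi_app x (rho i0 i1 k))).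
Proof.
under [RHS]eq_bigr do rewrite mulrBr.
rewrite [RHS]sumrB.
have E : forall j, \sum_k Psi R m.+1 j k * expR (- Psi_app x (rho i0 i1 k)) =
    \sum_k Psi R m.+1 j k * (if (k == 0 :> nat) then expR (- Psi_app x i0)
                              else expR (- Psi_app x i1)).
  by move=> j; apply: eq_bigr => u _; rewrite /rho; case: ifP.
under [X in _ = _ - X]eq_bigr do rewrite mulrBl.
rewrite [X in _ = _ - X]sumrB.
rewrite !E !(b_sym _ _ _ h0) !(@Psi_col0 R m _ _ h0) odd_rr // subrr subr0.
by rewrite /bcoef; under [RHS]eq_bigr do rewrite mulrBl; rewrite sumrB.
Qed.

Lemma exp_lip (R : realType) (z w : R) : 0 <= z -> 0 <= w ->
  `|expR (- z) - expR (- w)| <= `|z - w|.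
Proof.
wlog zw : z w / z <= w.
  move=> H z0 w0; case: (leP z w) => h; first exact: H.
  by rewrite distrC [`|z - w|]distrC; apply: H => //; exact: ltW.
move=> z0 w0.
have e : expR (- w) = expR (- z) * expR (- (w - z)) by rewrite -expRD; congr expR; ring.
have h1 : 1 - (w - z) <= expR (- (w - z)) by have := expR_ge1Dx (- (w - z)).
have h2 : expR (- (w - z)) <= 1 by rewrite -expR0 ler_expR lerNl oppr0 subr_ge0.
have h3 : expR (- z) <= 1 by rewrite -expR0 ler_expR lerNl oppr0.
have h4 := expR_gt0 (- z).
rewrite e -{1}(mulr1 (expR (- z))) -mulrBr normrM gtr0_norm // [`|z - w|]distrC.
rewrite ger0_norm ?subr_ge0 // ger0_norm ?subr_ge0 //.
apply: (@le_trans _ _ (1 * (w - z))); last by rewrite mul1r.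
apply: ler_pM; [exact: ltW|by rewrite subr_ge0|exact: h3|lra].
Qed.

Lemma powR_lip (R : realType) (p c M y z : R) : 1 <= p -> 0 < c ->
  c <= y -> y <= M -> c <= z -> z <= M ->
  `|y `^ p - z `^ p| <= p * M `^ (p - 1) * `|y - z|.
Proof.
move=> hp hc.
wlog yz : y z / y <= z.
  move=> H hy hyM hz hzM; case: (leP y z) => h; first exact: H.
  by rewrite distrC [`|y - z|]distrC; apply: H => //; exact: ltW.
move=> hy hyM hz hzM.
case: (eqVneq y z) => [->|yz']; first by rewrite !subrr normr0 mulr0.
have yz2 : y < z by rewrite lt_neqAle yz' yz.
have y0 : 0 < y by apply: lt_le_trans hc hy.
have dP : forall w : R, 0 < w -> is_derive w 1 (fun v : R => v `^ p) (p * w `^ (p - 1)).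
  by move=> w w0; apply: (@is_derive1_powR R p w w0).
have [w wi E] : exists2 w, w \in `]y, z[ & z `^ p - y `^ p = p * w `^ (p - 1) * (z - y).
  apply: (@MVT R (fun v : R => v `^ p) (fun w => p * w `^ (p - 1)) y z yz2).
    move=> w; rewrite in_itv /= => /andP[yw _]; apply: dP; exact: lt_trans yw.
  apply: derivable_within_continuous => w; rewrite in_itv /= => /andP[yw _].
  by apply: ex_derive; apply: dP; apply: lt_le_trans yw.
move: wi; rewrite in_itv /= => /andP[yw wz].
have w0 : 0 < w by apply: lt_trans y0 yw.
have p0 : 0 <= p by lra.
rewrite distrC E [`|y - z|]distrC (ger0_norm (x := z - y)) ?subr_ge0 //.
rewrite ger0_norm; last by rewrite !mulr_ge0 ?powR_ge0 ?subr_ge0.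
apply: ler_wpM2r; first by rewrite subr_ge0.
apply: ler_wpM2l => //.
apply: ge0_ler_powR; rewrite ?nnegrE; lra.
Qed.

Definition Fv (R : realType) m (p : R) (x : 'I_(2 ^ m).-1 -> R) (i : 'I_(2 ^ m).-1) : R :=
  (Dcoef x)^-1 * bcoef x i * x i `^ p.

Lemma Dcoef_ge1 (R : realType) m (x : 'I_(2 ^ m).-1 -> R) : 1 <= Dcoef x.
Proof. by rewrite /Dcoef lerDl sumr_ge0 // => j _; exact: ltW (expR_gt0 _). Qed.

Lemma bcoef_ge0 (R : realType) m (x : 'I_(2 ^ m).-1 -> R) i : 0 <= bcoef x i.
Proof. by rewrite /bcoef sumr_ge0 // => j _; rewrite mulr_ge0 ?Psi_ge0 // ltW // expR_gt0. Qed.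

Lemma Fv_ge0 (R : realType) m (p : R) (x : 'I_(2 ^ m).-1 -> R) i : 0 <= Fv p x i.
Proof.
rewrite /Fv !mulr_ge0 ?bcoef_ge0 ?powR_ge0 // invr_ge0.
exact: le_trans ler01 (Dcoef_ge1 x).
Qed.

Lemma Psi_app_ge0 (R : realType) m (x : 'I_(2 ^ m).-1 -> R) j :
  (forall k, 0 <= x k) -> 0 <= Psi_app x j.
Proof. by move=> hx; rewrite /Psi_app sumr_ge0 // => k _; rewrite mulr_ge0 ?Psi_ge0. Qed.

Lemma bcoef_le (R : realType) m (x : 'I_(2 ^ m).-1 -> R) i :
  (forall k, 0 <= x k) -> bcoef x i <= 2 * ((2 ^ m).-1)%:R.
Proof.
move=> hx; rewrite /bcoef.
apply: (@le_trans _ _ (\sum_(j < (2 ^ m).-1) (2 : R))).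
  apply: ler_sum => j _; rewrite -[2 in X in _ <= X]mulr1; apply: ler_pM.
  - exact: Psi_ge0.
  - exact: ltW (expR_gt0 _).
  - exact: Psi_le2.
  by rewrite -expR0 ler_expR lerNl oppr0 Psi_app_ge0.
by rewrite sumr_const card_ord mulr_natr.
Qed.

Lemma Psi_diff_le (R : realType) m (i j k l : 'I_(2 ^ m).-1) :
  `|Psi R m i j - Psi R m k l| <= 2.
Proof.
have := Psi_ge0 R m i j; have := Psi_ge0 R m k l.
have := Psi_le2 R m i j; have := Psi_le2 R m k l.
rewrite ler_norml; move=> *; apply/andP; split; lra.
Qed.

Lemma eqle (R : numDomainType) (x y : R) : x = y -> x <= y.
Proof. by move=> ->. Qed.

Lemma term_le_sum (R : realType) n (f : 'I_n -> R) i :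
  (forall k, 0 <= f k) -> f i <= \sum_k f k.
Proof. by move=> h; rewrite (bigD1 i) //= lerDl sumr_ge0. Qed.

Lemma Fv_diff (R : realType) m (p c M : R) (i0 i1 : 'I_(2 ^ m.+1).-1)
  (h0 : (i0 : nat) = 0%N) (h1 : (i1 : nat) = 1%N) (x : 'I_(2 ^ m.+1).-1 -> R)
  (hp : 1 <= p) (hc : 0 < c) (hx : forall k, c <= x k <= M) i :
  `|Fv p x i - Fv p x (rr i0 i1 i)| <=
  (4 * ((2 ^ m.+1).-1)%:R * M `^ p + 2 * ((2 ^ m.+1).-1)%:R * (p * M `^ (p - 1)))
   * \sum_k `|x k - x (rr i0 i1 k)|.
Proof.
set n := ((2 ^ m.+1).-1)%N.
set S := \sum_k `|x k - x (rr i0 i1 k)|.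
have x0 : forall k, 0 <= x k.
  by move=> k; have /andP[h _] := hx k; apply: le_trans (ltW hc) h.
have HS : 0 <= S by rewrite sumr_ge0.
have Hz : forall k, `|Psi_app x k - Psi_app x (rho i0 i1 k)| <= 2 * S.
  move=> k; rewrite Psi_app_diff //.
  apply: le_trans (ler_norm_sum _ _ _) _.
  rewrite /S big_distrr /=; apply: ler_sum => u _.
  by rewrite normrM ler_wpM2r // Psi_diff_le.
have Hb : `|bcoef x i - bcoef x (rr i0 i1 i)| <= 4 * n%:R * S.
  rewrite b_diff //.
  apply: le_trans (ler_norm_sum _ _ _) _.
  apply: (@le_trans _ _ (\sum_(k < n) (4 * S))); last first.
    by rewrite sumr_const card_ord -mulr_natr; apply: eqle; ring.
  apply: ler_sum => k _; rewrite normrM.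
  have -> : (4 : R) * S = 2 * (2 * S) by ring.
  apply: ler_pM => //; first exact: Psi_diff_le.
  apply: le_trans (exp_lip _ _) (Hz k); exact: Psi_app_ge0.
have Hp : `|x i `^ p - x (rr i0 i1 i) `^ p| <= p * M `^ (p - 1) * S.
  have /andP[a1 a2] := hx i; have /andP[b1 b2] := hx (rr i0 i1 i).
  apply: le_trans (powR_lip hp hc a1 a2 b1 b2) _.
  apply: ler_wpM2l; first by rewrite mulr_ge0 ?powR_ge0 //; lra.
  by rewrite /S (bigD1 i) //= lerDl sumr_ge0.
have HM : x i `^ p <= M `^ p.
  have /andP[a1 a2] := hx i.
  apply: ge0_ler_powR; rewrite ?nnegrE //; try lra.
have Hbr := bcoef_le (rr i0 i1 i) x0.
have HD : 0 < (Dcoef x)^-1 <= 1.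
  have h := Dcoef_ge1 x.
  have D0 : 0 < Dcoef x by apply: lt_le_trans ltr01 h.
  by apply/andP; split; [rewrite invr_gt0|rewrite invr_le1 // unitfE gt_eqF].
have -> : Fv p x i - Fv p x (rr i0 i1 i) =
  (Dcoef x)^-1 * ((bcoef x i - bcoef x (rr i0 i1 i)) * x i `^ p +
                  bcoef x (rr i0 i1 i) * (x i `^ p - x (rr i0 i1 i) `^ p)).
  by rewrite /Fv; ring.
rewrite normrM (gtr0_norm (proj1 (andP HD))).
rewrite -[X in _ <= X]mul1r; apply: ler_pM => //.
- exact: ltW (proj1 (andP HD)).
- exact: (proj2 (andP HD)).
apply: le_trans (ler_normD _ _) _.
rewrite [X in _ <= X]mulrDl; apply: lerD.
  rewrite normrM (ger0_norm (powR_ge0 _ _)).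
  apply: le_trans (ler_wpM2r (powR_ge0 _ _) Hb) _.
  by rewrite mulrAC; apply: ler_wpM2r => //; apply: ler_wpM2l => //.
rewrite normrM (ger0_norm (bcoef_ge0 _ _)).
apply: le_trans (ler_pM (bcoef_ge0 _ _) (normr_ge0 _) Hbr Hp) _.
by apply: eqle; ring.
Qed.

Lemma ratio_pos (R : realType) (g d e0 e1 D K p th : R) :
  0 < g -> 0 < d -> 0 < e0 -> 0 < e1 -> 0 < D -> 2 < K -> 1 < p -> 0 < th ->
  th `^ (p - 1) = K / (K - 2) -> th < g / d ->
  0 < g * (- (d ^- 2) * (D^-1 * (K * e1) * d `^ p)) +
      d^-1 * (D^-1 * (2 * e0 + (K - 2) * e1) * g `^ p).
Proof.
move=> g0 d0 e00 e10 D0 K2 p1 th0 hth hr.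
set r := g / d.
have r0 : 0 < r by rewrite divr_gt0.
set X := r `^ (p - 1); set B := d `^ (p - 1).
have B0 : 0 < B by rewrite powR_gt0.
have hgd : g = r * d by rewrite /r divfK // gt_eqF.
have hgp : g `^ p = r * d * X * B.
  rewrite -mulr_powRB1 ?ltW //; last by lra.
  by rewrite [in X in _ * X]hgd powRM ?ltW // -hgd mulrA.
have hdp : d `^ p = d * B by rewrite -mulr_powRB1 ?ltW //; lra.
have hX : K / (K - 2) < X.
  by rewrite -hth; apply: gt0_ltr_powR; rewrite ?nnegrE ?ltW //; lra.
have hX2 : K < (K - 2) * X.
  by rewrite -ltr_pdivrMl ?subr_gt0 // mulrC.
rewrite hgp hdp hgd.
have -> : r * d * (- (d ^- 2) * (D^-1 * (K * e1) * (d * B))) +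
    d^-1 * (D^-1 * (2 * e0 + (K - 2) * e1) * (r * d * X * B)) =
    D^-1 * r * B * (2 * e0 * X + e1 * ((K - 2) * X - K)).
  by field; rewrite !gt_eqF.
rewrite !mulr_gt0 ?invr_gt0 //.
rewrite addr_gt0 // ?mulr_gt0 ?subr_gt0 //.
by apply: lt_trans hX; rewrite divr_gt0 //; lra.
Qed.

Lemma sym_vals (R : realType) m (i0 i1 : 'I_(2 ^ m.+1).-1)
  (h0 : (i0 : nat) = 0%N) (h1 : (i1 : nat) = 1%N) (x : 'I_(2 ^ m.+1).-1 -> R) :
  (forall k, x k = x (rr i0 i1 k)) ->
  bcoef x i0 = 2 * expR (- Psi_app x i0) + ((2 ^ m.+1)%:R - 2) * expR (- Psi_app x i1) /\
  bcoef x i1 = (2 ^ m.+1)%:R * expR (- Psi_app x i1).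
Proof.
move=> hx.
have Hz : forall k, Psi_app x k = Psi_app x (rho i0 i1 k).
  move=> k; apply/eqP; rewrite -subr_eq0; apply/eqP.
  rewrite Psi_app_diff //; apply: big1 => u _; by rewrite -hx subrr mulr0.
have Hb : forall i, bcoef x i = \sum_k Psi R m.+1 i k *
    (if (k == 0 :> nat) then expR (- Psi_app x i0) else expR (- Psi_app x i1)).
  by move=> i; apply: eq_bigr => k _; rewrite Hz /rho; case: ifP.
rewrite !Hb !(b_sym _ _ _ h0) !(@Psi_col0 R m _ _ h0) h0 h1 /=.
by split; ring.
Qed.


Lemma eqle' (R : numDomainType) (x y : R) : x = y -> x <= y.
Proof. by move=> ->. Qed.

Lemma within_cont_eps (R : realType) (q : R -> R) (s0 th : R) :
  {within [set x : R | 0 <= x], continuous q}%classic -> 0 <= s0 -> th < q s0 ->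
  exists2 d, 0 < d & forall y, 0 <= y -> `|s0 - y| < d -> th < q y.
Proof.
move=> /subspace_continuousP H s00 hq.
have := H s0 s00; move/cvgrPdist_lt => /(_ (q s0 - th)).
rewrite subr_gt0 => /(_ hq).
rewrite near_withinE => /nbhs_ballP [d /= d0 Hd].
exists d => // y y0 hy.
have := Hd y hy y0 => /= h.
have := ler_norm (q s0 - q y); lra.
Qed.

Lemma cont_sub (R : realType) (f : R -> R) (s t : R) :
  {within [set x : R | 0 <= x], continuous f}%classic -> 0 <= s ->
  {within `[s, t], continuous f}%classic.
Proof.
move=> hf hs; apply: continuous_subspaceW hf => x /=.
rewrite in_itv /= => /andP[h _]; exact: le_trans h.
Qed.

Lemma first_hit (R : realType) (q dq : R -> R) (th : R) :
  {within [set x : R | 0 <= x], continuous q}%classic ->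
  th < q 0 ->
  (forall s : R, 0 < s -> is_derive s 1 q (dq s)) ->
  (forall s : R, 0 < s -> th < q s -> 0 < dq s) ->
  forall t, 0 <= t -> th < q t.
Proof.
move=> hc hq0 hd hpos t1 t10.
case: (ltP th (q t1)) => // ht1; exfalso.
set A := [set s : R | 0 <= s /\ q s <= th]%classic.
have A1 : A t1 by [].
have lbA : lbound A 0 by move=> x [].
have hinf : has_inf A by split; [exists t1|exists 0].
set s0 := inf A.
have s00 : 0 <= s0 by apply: lb_le_inf => //; exists t1.
have hs0 : q s0 <= th.
  case: (ltP th (q s0)) => // hlt; exfalso.
  have [d d0 Hd] := within_cont_eps hc s00 hlt.
  have [e [e0 qe] ed] := inf_adherent d0 hinf.
  have se : s0 <= e by apply: ge_inf => //; exists 0.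
  have := Hd e e0; rewrite distrC ger0_norm ?subr_ge0 // => /(_ _) h.
  have := h ltac:(lra); lra.
have sp : 0 < s0.
  rewrite lt_neqAle s00 andbT; apply/eqP => e0; move: hs0; rewrite -e0; lra.
have below : forall x, 0 <= x -> x < s0 -> th < q x.
  move=> x x0 xs; case: (ltP th (q x)) => // hx; exfalso.
  have : s0 <= x by apply: ge_inf => //; exists 0.
  lra.
have [c cin E] : exists2 c, c \in `]0, s0[ & q s0 - q 0 = dq c * (s0 - 0).
  apply: MVT sp _ (cont_sub hc (lexx 0)).
  by move=> x; rewrite in_itv /= => /andP[x0 _]; apply: hd.
move: cin; rewrite in_itv /= => /andP[c0 cs].
have := hpos c c0 (below c (ltW c0) cs).
have : 0 < dq c * (s0 - 0) -> False by rewrite -E; lra.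
move=> H h; apply: H; rewrite mulr_gt0 //; lra.
Qed.

Lemma strict_incr (R : realType) (q dq : R -> R) (th : R) :
  {within [set x : R | 0 <= x], continuous q}%classic ->
  (forall s : R, 0 < s -> is_derive s 1 q (dq s)) ->
  (forall s : R, 0 < s -> 0 < dq s) ->
  forall s t, 0 <= s -> s < t -> q s < q t.
Proof.
move=> hc hd hpos s t s0 st.
have [c cin E] : exists2 c, c \in `]s, t[ & q t - q s = dq c * (t - s).
  apply: MVT st _ (cont_sub hc s0).
  move=> x; rewrite in_itv /= => /andP[x0 _]; apply: hd; exact: le_lt_trans x0.
move: cin; rewrite in_itv /= => /andP[c0 _].
have := hpos c (le_lt_trans s0 c0).
have : 0 < dq c * (t - s) by rewrite mulr_gt0 // ?subr_gt0 // hpos // (le_lt_trans s0 c0).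
rewrite -E; lra.
Qed.

Lemma nondecr (R : realType) (q dq : R -> R) :
  {within [set x : R | 0 <= x], continuous q}%classic ->
  (forall s : R, 0 < s -> is_derive s 1 q (dq s)) ->
  (forall s : R, 0 < s -> 0 <= dq s) ->
  forall s t, 0 <= s -> s <= t -> q s <= q t.
Proof.
move=> hc hd hpos s t s0; rewrite le_eqVlt => /predU1P[->//|st].
have [c cin E] : exists2 c, c \in `]s, t[ & q t - q s = dq c * (t - s).
  apply: MVT st _ (cont_sub hc s0).
  move=> x; rewrite in_itv /= => /andP[x0 _]; apply: hd; exact: le_lt_trans x0.
move: cin; rewrite in_itv /= => /andP[c0 _].
have : 0 <= dq c * (t - s) by rewrite mulr_ge0 // ?subr_ge0 ?hpos // ?(le_lt_trans s0 c0) // ltW.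
rewrite -E; lra.
Qed.

Lemma within_continuousM' (R : realType) (A : set R) (f g : R -> R) :
  {within A, continuous f}%classic -> {within A, continuous g}%classic ->
  {within A, continuous (f * g)}%classic.
Proof. by move=> cf cg x; apply: cvgM; [exact: cf|exact: cg]. Qed.

Lemma derive_expCx (R : realType) (C x : R) :
  is_derive x 1 (fun y => expR (- (C * y))) (expR (- (C * x)) * (- C)).
Proof.
have h1 : is_derive x 1 (fun y : R => - (C * y)) (- C).
  have := @is_deriveZ R R R id C x 1 1 (is_derive_id x 1).
  move/is_deriveN; rewrite /GRing.scale /= mulr1 => h; exact: h.
exact: (@is_derive1_comp R expR (fun y : R => - (C * y)) x _ _ _ h1).
Qed.

Lemma gronwall0 (R : realType) (V dV : R -> R) (C t : R) : 0 < t -> 0 <= C ->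
  {within `[0, t], continuous V}%classic ->
  (forall x, 0 < x -> x < t -> is_derive x 1 V (dV x)) ->
  (forall x, 0 < x -> x < t -> dV x <= C * V x) ->
  V 0 = 0 -> V t <= 0.
Proof.
move=> t0 C0 hc hd hle V0.
set W := fun x => V x * expR (- (C * x)).
have hW : forall x, 0 < x -> x < t ->
    is_derive x 1 W (V x * (expR (- (C * x)) * (- C)) + expR (- (C * x)) * dV x).
  move=> x x0 xt; exact: (is_deriveM (hd x x0 xt) (derive_expCx C x)).
have cW : {within `[0, t], continuous W}%classic.
  apply: within_continuousM' => //.
  apply: derivable_within_continuous => x _; apply: ex_derive; exact: derive_expCx.
have [c cin E] : exists2 c, c \in `]0, t[ &
    W t - W 0 = (V c * (expR (- (C * c)) * (- C)) + expR (- (C * c)) * dV c) * (t - 0).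
  apply: MVT t0 _ cW.
  by move=> x; rewrite in_itv /= => /andP[x0 xt]; apply: hW.
move: cin; rewrite in_itv /= => /andP[c0 ct].
have e0 := expR_gt0 (- (C * c)).
have h1 := hle c c0 ct.
have : (V c * (expR (- (C * c)) * (- C)) + expR (- (C * c)) * dV c) <= 0.
  have -> : V c * (expR (- (C * c)) * (- C)) + expR (- (C * c)) * dV c =
            expR (- (C * c)) * (dV c - C * V c) by ring.
  by rewrite pmulr_rle0 // subr_le0.
move=> hneg.
have : W t <= 0.
  have : W t - W 0 <= 0 by rewrite E pmulr_lle0 // subr0.
  by rewrite /W V0 mul0r subr0.
rewrite /W pmulr_lle0 //; exact: expR_gt0.
Qed.

Lemma wc_sum (R : realType) (A : set R) (I : Type) (s : seq I) (f : I -> R -> R) :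
  (forall i, {within A, continuous (f i)}%classic) ->
  {within A, continuous (fun x => \sum_(i <- s) f i x)}%classic.
Proof.
move=> cf; elim: s => [|i s IH].
  have -> : (fun x : R => \sum_(i <- [::]) f i x) = (fun=> 0) by apply/funext => x; rewrite big_nil.
  by move=> x; apply: cvg_cst.
have -> : (fun x : R => \sum_(j <- i :: s) f j x) = f i + (fun x => \sum_(j <- s) f j x).
  by apply/funext => x; rewrite big_cons.
exact: within_continuousD.
Qed.

Lemma sum_sq (R : realType) n (d : 'I_n -> R) :
  (\sum_k `|d k|) ^+ 2 <= n%:R * \sum_k d k ^+ 2.
Proof.
have H : 2 * (\sum_k `|d k|) ^+ 2 <= 2 * (n%:R * \sum_k d k ^+ 2).
  rewrite expr2 big_distrl /= big_distrr /=.
  under eq_bigr do rewrite big_distrr /= big_distrr /=.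
  apply: (@le_trans _ _ (\sum_i \sum_k (d i ^+ 2 + d k ^+ 2))).
    apply: ler_sum => i _; apply: ler_sum => k _.
    have := sqr_ge0 (`|d i| - `|d k|).
    rewrite -[d i ^+ 2]real_normK ?num_real // -[d k ^+ 2]real_normK ?num_real //.
    move=> h; nra.
  have -> : \sum_i \sum_k (d i ^+ 2 + d k ^+ 2) =
            \sum_i (n%:R * d i ^+ 2 + \sum_k d k ^+ 2).
    by apply: eq_bigr => i _; rewrite big_split /= sumr_const card_ord mulr_natl.
  rewrite big_split /= -big_distrr /= sumr_const card_ord.
  apply: eqle'; rewrite -mulr_natl; ring.
by rewrite ler_pM2l in H.
Qed.

Lemma within_contV (R : realType) (f : R -> R) :
  {within [set x : R | 0 <= x], continuous f}%classic ->
  (forall x, 0 <= x -> f x != 0) ->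
  {within [set x : R | 0 <= x], continuous (fun x => (f x)^-1)}%classic.
Proof.
move=> /subspace_continuousP hf hnz; apply/subspace_continuousP => x hx.
exact: (cvgV (hnz x hx) (hf x hx)).
Qed.

Lemma wcM (R : realType) (A : set R) (f g : R -> R) :
  {within A, continuous f}%classic -> {within A, continuous g}%classic ->
  {within A, continuous (fun x => f x * g x)}%classic.
Proof. by move=> cf cg x; apply: cvgM; [exact: cf|exact: cg]. Qed.

Lemma wcB (R : realType) (A : set R) (f g : R -> R) :
  {within A, continuous f}%classic -> {within A, continuous g}%classic ->
  {within A, continuous (fun x => f x - g x)}%classic.
Proof. by move=> cf cg x; apply: cvgB; [exact: cf|exact: cg]. Qed.


Lemma sym_preserved (R : realType) m (p : R) (hp : 1 <= p)
  (a : R -> 'I_(2 ^ m.+1).-1 -> R) (i0 i1 : 'I_(2 ^ m.+1).-1)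
  (h0 : (i0 : nat) = 0%N) (h1 : (i1 : nat) = 1%N) (c : R) (hc : 0 < c)
  (hlow : forall (t : R) k, 0 <= t -> c <= a t k)
  (hcont : forall k, {within [set x : R | 0 <= x], continuous (fun s => a s k)}%classic)
  (hode : forall (t : R) k, 0 < t -> is_derive t 1 (fun s => a s k) (Fv p (a t) k))
  (hinit : forall k, a 0 k = a 0 (rr i0 i1 k)) :
  forall t k, 0 <= t -> a t k = a t (rr i0 i1 k).
Proof.
move=> t k0 t0.
case: (eqVneq t 0) => [->|tn0]; first exact: hinit.
have tp : 0 < t by rewrite lt_neqAle eq_sym tn0.
have [M hM] : exists M, forall k x, 0 <= x <= t -> a x k <= M.
  have H : forall k, exists ck, forall x, 0 <= x <= t -> a x k <= a ck k.
    move=> k; have [ck _ hck] := EVT_max (ltW tp) (cont_sub (hcont k) (lexx 0)).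
    by exists ck => x hx; apply: hck; rewrite in_itv /=.
  have [f hf] := choice H.
  exists (\sum_k `|a (f k) k|) => k x hx.
  apply: le_trans (hf k x hx) _; apply: le_trans (ler_norm _) _.
  by rewrite (bigD1 k) //= lerDl sumr_ge0.
set n := ((2 ^ m.+1).-1)%N.
set C0 := 4 * n%:R * M `^ p + 2 * n%:R * (p * M `^ (p - 1)).
have C00 : 0 <= C0.
  rewrite /C0 addr_ge0 // !mulr_ge0 ?powR_ge0 ?ler0n //; lra.
pose dk := fun k x => a x k - a x (rr i0 i1 k).
pose V := \sum_(k < n) (dk k * dk k).
have VE : forall x, V x = \sum_(k < n) dk k x * dk k x.
  by move=> x; rewrite /V fct_sumE.
pose dV := fun x => \sum_(k < n) (dk k x *: (Fv p (a x) k - Fv p (a x) (rr i0 i1 k)) +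
                                  dk k x *: (Fv p (a x) k - Fv p (a x) (rr i0 i1 k))).
have hVt : V t <= 0.
  apply: (@gronwall0 R V dV (2 * n%:R * C0) t tp).
  - by rewrite !mulr_ge0 ?ler0n.
  - have -> : V = fun x => \sum_(k < n) dk k x * dk k x by rewrite /V fct_sumE.
    apply: wc_sum => k; apply: wcM; apply: wcB; exact: cont_sub (hcont _) (lexx 0).
  - move=> x x0 xt; apply: is_derive_sum => k.
    apply: is_deriveM; apply: is_deriveB; exact: hode.
  - move=> x x0 xt.
    have hx : forall k, c <= a x k <= M.
      move=> k; apply/andP; split; first by apply: hlow; exact: ltW.
      by apply: (hM k x); rewrite !ltW.
    set S := \sum_(k < n) `|dk k x|.
    have HF : forall k, `|Fv p (a x) k - Fv p (a x) (rr i0 i1 k)| <= C0 * S.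
      by move=> k; exact: (Fv_diff h0 h1 hp hc hx k).
    have S0 : 0 <= S by rewrite sumr_ge0.
    apply: (@le_trans _ _ (\sum_(k < n) (2 * C0 * S) * `|dk k x|)).
      rewrite /dV; apply: ler_sum => k _.
      have -> : dk k x *: (Fv p (a x) k - Fv p (a x) (rr i0 i1 k)) +
                dk k x *: (Fv p (a x) k - Fv p (a x) (rr i0 i1 k)) =
                2 * (dk k x * (Fv p (a x) k - Fv p (a x) (rr i0 i1 k))) by rewrite /GRing.scale /=; ring.
      rewrite -!mulrA ler_wpM2l //.
      apply: le_trans (ler_norm _) _; rewrite normrM.
      apply: (@le_trans _ _ (`|dk k x| * (C0 * S))); first by apply: ler_wpM2l => //; exact: HF.
      by apply: eqle; ring.
    rewrite -big_distrr /= -/S VE.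
    have := sum_sq (fun k => dk k x).
    rewrite -/S => hS.
    have -> : \sum_(k < n) dk k x * dk k x = \sum_(k < n) dk k x ^+ 2.
      by apply: eq_bigr => k _; rewrite expr2.
    apply: (@le_trans _ _ (2 * C0 * (n%:R * \sum_(k < n) dk k x ^+ 2))).
      by rewrite -mulrA -expr2; apply: ler_wpM2l => //; rewrite mulr_ge0.
    by apply: eqle; ring.
  - rewrite VE; apply: big1 => k _; by rewrite /dk -hinit subrr mulr0.
have hVt0 : forall k, dk k t * dk k t = 0.
  move=> k; move: hVt; rewrite VE => hVt.
  have hge : forall k, 0 <= dk k t * dk k t by move=> k'; rewrite -expr2 sqr_ge0.
  apply: (psumr_eq0P (P := xpredT) (fun k _ => hge k)) => //.
  by apply/le_anti; rewrite hVt sumr_ge0.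
have /eqP := hVt0 k0; rewrite mulf_eq0 orbb /dk subr_eq0 => /eqP //.
Qed.

Unset Implicit Arguments.

Theorem mainTheorem13 (R : realType) (m L : nat) (hm : (2 <= m)%N) (hL : (2 <= L)%N)
  (a : R -> 'I_(2 ^ m).-1 -> R) (gamma0 delta0 : R)
  (hg0 : 0 < gamma0) (hd0 : 0 < delta0)
  (hratio0 : ((2 ^ m)%:R / ((2 ^ m)%:R - 2)) `^ ((L%:R + 1) / (L%:R - 1))
             < gamma0 / delta0)
  (hinit : forall i : 'I_(2 ^ m).-1,
      a 0 i = if odd i.+1 then gamma0 else delta0)
  (hcont : forall i : 'I_(2 ^ m).-1,
      ({within [set x : R | 0 <= x], continuous (fun s => a s i)})%classic)
  (hode : forall (t : R) (i : 'I_(2 ^ m).-1), 0 < t ->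
      is_derive t 1 (fun s => a s i)
        ((Dcoef (a t))^-1 * bcoef (a t) i
           * (a t i) `^ (2 * L%:R / (L%:R + 1)))) :
  exists gamma delta : R -> R,
    [/\ forall t, 0 <= t -> 0 < gamma t /\ 0 < delta t,
        forall t (i : 'I_(2 ^ m).-1), 0 <= t ->
          a t i = if odd i.+1 then gamma t else delta t,
        forall s t, 0 <= s -> s < t -> gamma s / delta s < gamma t / delta t
      & forall t, 0 <= t ->
          ((2 ^ m)%:R / ((2 ^ m)%:R - 2)) `^ ((L%:R + 1) / (L%:R - 1))
            < gamma t / delta t].
Proof.
case: m hm a hratio0 hinit hcont hode => [//|m] hm a hratio0 hinit hcont hode.
have hK4 : (4 <= 2 ^ m.+1)%N by rewrite -[4%N]/(2 ^ 2)%N leq_exp2l.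
have hn1 : (1 < (2 ^ m.+1).-1)%N by move: hK4; case: (2 ^ m.+1)%N => [|[|[|[|k]]]].
pose i0 : 'I_(2 ^ m.+1).-1 := Ordinal (ltn_trans (isT : (0 < 1)%N) hn1).
pose i1 : 'I_(2 ^ m.+1).-1 := Ordinal hn1.
have h0 : (i0 : nat) = 0%N by [].
have h1 : (i1 : nat) = 1%N by [].
set p : R := 2 * L%:R / (L%:R + 1).
have hL2 : (2 : R) <= L%:R by rewrite (ler_nat R 2 L).
have hp1 : 1 < p by rewrite /p ltr_pdivlMr; lra.
have hode' : forall (t : R) k, 0 < t -> is_derive t 1 (fun s => a s k) (Fv p (a t) k).
  exact: hode.
have hinit' : forall k, a 0 k = a 0 (rr i0 i1 k) by move=> k; rewrite !hinit odd_rr.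
set c := Num.min gamma0 delta0.
have c0 : 0 < c by rewrite lt_min hg0 hd0.
have hmono : forall k s t, 0 <= s -> s <= t -> a s k <= a t k.
  move=> k; exact: (nondecr (hcont k) (fun s hs => hode' s k hs) (fun s _ => Fv_ge0 p (a s) k)).
have hlow : forall (t : R) k, 0 <= t -> c <= a t k.
  move=> t k t0; apply: le_trans (hmono k 0 t (lexx 0) t0).
  by rewrite hinit; case: odd; rewrite ge_min lexx ?orbT.
have hsym := sym_preserved (ltW hp1) h0 h1 c0 hlow hcont hode' hinit'.
have pos : forall (t : R) k, 0 <= t -> 0 < a t k by move=> t k t0; apply: lt_le_trans c0 (hlow t k t0).
set K : R := (2 ^ m.+1)%:R.
have hK : 2 < K by rewrite /K (ltr_nat R 2); apply: leq_trans hK4.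
set th := (K / (K - 2)) `^ ((L%:R + 1) / (L%:R - 1)).
have KK0 : 0 < K / (K - 2) by rewrite divr_gt0 //; lra.
have th0 : 0 < th by rewrite powR_gt0.
have hth : th `^ (p - 1) = K / (K - 2).
  rewrite /th -powRrM.
  have -> : (L%:R + 1) / (L%:R - 1) * (p - 1) = 1 :> R.
    rewrite /p; field; rewrite ?gt_eqF //; lra.
  by rewrite powRr1 // ltW.
pose q := fun s => a s i0 / a s i1.
pose dq := fun s => a s i0 * (- (a s i1) ^- 2 * Fv p (a s) i1) + (a s i1)^-1 * Fv p (a s) i0.
have hq : {within [set x : R | 0 <= x], continuous q}%classic.
  apply: wcM; first exact: hcont.
  by apply: within_contV; [exact: hcont|move=> x x0; rewrite gt_eqF // pos].
have hdq : forall s : R, 0 < s -> is_derive s 1 q (dq s).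
  move=> s s0.
  exact (is_deriveM (hode' s i0 s0) (is_deriveV (lt0r_neq0 (pos s i1 (ltW s0))) (hode' s i1 s0))).
have hpos : forall s : R, 0 < s -> th < q s -> 0 < dq s.
  move=> s s0 hs.
  have hx : forall k, a s k = a s (rr i0 i1 k) by move=> k; apply: hsym; exact: ltW.
  have [hb0 hb1] := sym_vals h0 h1 hx.
  rewrite /dq /Fv hb0 hb1.
  apply: (@ratio_pos R _ _ _ _ _ K p th) => //; try exact: pos (ltW s0).
  - exact: expR_gt0.
  - exact: expR_gt0.
  - by apply: lt_le_trans ltr01 (Dcoef_ge1 _).
have hq0 : th < q 0 by rewrite /q !hinit.
have hall := first_hit hq hq0 hdq hpos.
exists (fun s => a s i0), (fun s => a s i1); split.
- by move=> t t0; split; apply: pos.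
- by move=> t i t0; rewrite hsym // /rr; case: odd.
- move=> s t s0 st; exact: (@strict_incr R q dq th hq hdq (fun s hs => hpos s hs (hall s (ltW hs))) s t s0 st).
- exact: hall.
Qed.
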